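(* Let $n\ge2$, $A\in\mathbb{R}^{n\times n}$, $B\in\mathbb{R}^n$ with $B\neq0$, and $\mu\in\mathbb{R}$. Let $q\in\mathbb{R}^n$ be a unit vector with $(A-\mu I)q\in\operatorname{span}\{B\}$ and let $Q\in\mathbb{R}^{n\times(n-1)}$ be such that $(q\;\;Q)$ is orthogonal. Put $\bar A=Q^TAQ$, $\bar B=Q^TB$ and $$K_o=\frac{B^T}{B^TB}(A-\mu I)\,qq^T .$$ Then for every $\bar K\in\mathbb{R}^{1\times(n-1)}$ and every $\lambda$, $$\det\big(\lambda I_n-A+B(K_o+\bar KQ^T)\big)=(\lambda-\mu)\,\det\big(\lambda I_{n-1}-\bar A+\bar B\bar K\big).$$ Consequently, if $\bar K$ gives $\bar A-\bar B\bar K$ the eigenvalues $\lambda_2,\dots,\lambda_n$, then $K_o+\bar KQ^T$ gives $A-B(K_o+\bar KQ^T)$ the eigenvalues $\mu,\lambda_2,\dots,\lambda_n$. *)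

(* Defs.v *)
From HB Require Import structures.
From mathcomp Require Import all_boot all_order all_algebra.
Set Implicit Arguments. Unset Strict Implicit. Unset Printing Implicit Defensive.
Import Order.TTheory GRing.Theory Num.Theory.
Local Open Scope ring_scope.

Definition Ko (R : fieldType) (n : nat) (A : 'M[R]_n) (B : 'cV[R]_n)
  (mu : R) (q : 'cV[R]_n) : 'rV[R]_n :=
  ((B^T *m B) 0 0)^-1 *: (B^T *m (A - mu%:M) *m q *m q^T).

(* Main.v *)
Require Import Defs.
From HB Require Import structures.
From mathcomp Require Import all_boot all_order all_algebra.
Import Order.TTheory GRing.Theory Num.Theory.
Local Open Scope ring_scope.

Set Implicit Arguments. Unset Strict Implicit.

Lemma orth_facts (T : comRingType) m (q : 'cV[T]_(m.+2)) (Q : 'M[T]_(m.+2, m.+1)) :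
  (row_mx q Q)^T *m (row_mx q Q) = 1%:M ->
  [/\ q^T *m q = 1%:M, q^T *m Q = 0, Q^T *m q = 0 & Q^T *m Q = 1%:M].
Proof.
rewrite tr_row_mx mul_col_mx !mul_mx_row (scalar_mx_block 1 m.+1) -block_mxEv.
by case/eq_block_mx.
Qed.

Lemma core (T : comRingType) m (A : 'M[T]_(m.+2)) (B : 'cV[T]_(m.+2))
  (K : 'rV[T]_(m.+2)) (q : 'cV[T]_(m.+2)) (Q : 'M[T]_(m.+2, m.+1))
  (Kb : 'rV[T]_(m.+1)) (mu c x : T) :
  (row_mx q Q)^T *m (row_mx q Q) = 1%:M ->
  A *m q = mu *: q + c *: B -> K *m q = c%:M -> K *m Q = Kb ->
  \det (x%:M - A + B *m K)
  = (x - mu) * \det (x%:M - Q^T *m A *m Q + Q^T *m B *m Kb).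
Proof.
move=> hP hAq hKq hKQ.
have [hqq hqQ hQq hQQ] := orth_facts hP.
set P := row_mx q Q.
set M := x%:M - A + B *m K.
have hdet : \det P^T * \det P = 1.
  by rewrite -det_mulmx hP det1.
have -> : \det M = \det (P^T *m M *m P).
  by rewrite !det_mulmx mulrAC hdet mul1r.
have e1 : Q^T *m M *m q = 0.
  rewrite /M -mulmxA mulmxDl mulmxBl mul_scalar_mx -mulmxA hAq hKq mul_mx_scalar.
  rewrite mulmxDr mulmxBr mulmxDr -!scalemxAr hQq !scaler0.
  by rewrite !add0r addNr.
have e2 : q^T *m M *m q = (x - mu)%:M.
  rewrite /M -mulmxA mulmxDl mulmxBl mul_scalar_mx -mulmxA hAq hKq mul_mx_scalar.
  rewrite mulmxDr mulmxBr mulmxDr -!scalemxAr hqq.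
  by rewrite opprD addrA subrK !scalemx1 raddfB.
have e3 : Q^T *m M *m Q = x%:M - Q^T *m A *m Q + Q^T *m B *m Kb.
  rewrite /M -mulmxA mulmxDl mulmxBl mul_scalar_mx -(mulmxA B) hKQ.
  by rewrite mulmxDr mulmxBr -scalemxAr hQQ scalemx1 !mulmxA.
rewrite /P tr_row_mx mul_col_mx mul_col_row e1 e2 e3 det_ublock det_mx11.
by rewrite mxE eqxx mulr1n.
Qed.

Theorem mainTheorem11 (R : realFieldType) (n : nat) (hn : (2 <= n)%N)
  (A : 'M[R]_n) (B : 'cV[R]_n) (hB : B != 0) (mu : R)
  (q : 'cV[R]_n) (Q : 'M[R]_(n, n.-1))
  (hq : q^T *m q = 1%:M)
  (hspan : exists c : R, (A - mu%:M) *m q = c *: B)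
  (horth : (row_mx q Q)^T *m (row_mx q Q) = 1%:M) :
  let Abar := Q^T *m A *m Q in
  let Bbar := Q^T *m B in
  forall Kbar : 'rV[R]_(n.-1),
    let K := Ko A B mu q + Kbar *m Q^T in
    [/\ forall lambda : R,
          \det (lambda%:M - A + B *m K)
          = (lambda - mu) * \det (lambda%:M - Abar + Bbar *m Kbar),
        char_poly (A - B *m K) = ('X - mu%:P) * char_poly (Abar - Bbar *m Kbar)
      & forall lam : 'I_(n.-1) -> R,
          char_poly (Abar - Bbar *m Kbar) = \prod_(i < n.-1) ('X - (lam i)%:P) ->
          char_poly (A - B *m K)
          = ('X - mu%:P) * \prod_(i < n.-1) ('X - (lam i)%:P)].
Proof.
destruct n as [|[|m]]; first by [].
  by [].
move=> Abar Bbar Kbar K.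
have [hqq hqQ hQq hQQ] := orth_facts horth.
case: hspan => c hc.
have hAq : A *m q = mu *: q + c *: B.
  by move: hc; rewrite mulmxBl mul_scalar_mx => /eqP; rewrite subr_eq addrC => /eqP.
set s := (B^T *m B) 0 0.
have hs : s != 0.
  apply: contraNneq hB => hs0; apply/eqP/matrixP => i j.
  rewrite (ord1 j) mxE.
  move: hs0; rewrite /s mxE => /eqP; rewrite psumr_eq0; last first.
    by move=> k _; rewrite !mxE -expr2 sqr_ge0.
  move/allP => /(_ i (mem_index_enum _)) /=; rewrite mxE mulf_eq0 orbb => /eqP //.
have hKq : K *m q = c%:M.
  rewrite /K /Ko mulmxDl -(mulmxA Kbar) hQq mulmx0 addr0 -scalemxAl.
  rewrite -(mulmxA _ q^T) hqq mulmx1 -mulmxA hc -scalemxAr.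
  have -> : B^T *m B = s%:M by rewrite {1}(mx11_scalar (B^T *m B)).
  apply/matrixP => i j; rewrite (ord1 i) (ord1 j) !mxE eqxx !mulr1n.
  by rewrite mulrC mulfK.
have hKQ : K *m Q = Kbar.
  rewrite /K /Ko mulmxDl -(mulmxA Kbar) hQQ mulmx1 -scalemxAl -mulmxA hqQ.
  by rewrite mulmx0 scaler0 add0r.
have p1 : forall lambda : R,
    \det (lambda%:M - A + B *m K)
    = (lambda - mu) * \det (lambda%:M - Abar + Bbar *m Kbar).
  by move=> lambda; rewrite (core _ horth hAq hKq hKQ) /Abar /Bbar.
have eqm : forall k (X Y Z : 'M[{poly R}]_k), X - (Y - Z) = X - Y + Z.
  by move=> k X Y Z; rewrite opprD opprK addrA.
have h1 : (row_mx (map_mx polyC q) (map_mx polyC Q))^T *m (row_mx (map_mx polyC q) (map_mx polyC Q)) = 1%:M.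
  by rewrite -map_row_mx map_trmx -map_mxM horth map_mx1.
have h2 : map_mx polyC A *m map_mx polyC q = mu%:P *: map_mx polyC q + c%:P *: map_mx polyC B.
  by rewrite -map_mxM hAq map_mxD !map_mxZ.
have h3 : map_mx polyC K *m map_mx polyC q = (c%:P)%:M.
  by rewrite -map_mxM hKq map_scalar_mx.
have h4 : map_mx polyC K *m map_mx polyC Q = map_mx polyC Kbar.
  by rewrite -map_mxM hKQ.
have p2 : char_poly (A - B *m K) = ('X - mu%:P) * char_poly (Abar - Bbar *m Kbar).
  rewrite /char_poly /char_poly_mx !map_mxB !map_mxM eqm eqm.
  rewrite /Abar /Bbar ?map_mxM -?map_trmx.
  exact: (core 'X h1 h2 h3 h4).
split=> //.
by move=> lam hl; rewrite p2 hl.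
Qed.
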